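(* Let $(S,\ast)$ and $(T,\ast')$ be adequate commutative partial semigroups, let $h:S\to T$ be a surjective partial semigroup homomorphism, and let $\tilde h:\beta S\to\beta T$ be the continuous extension of $h$, and suppose $\tilde h$ maps $\delta S$ onto $\delta T$. Let $A\subseteq T$ be a set that is not central in $T$, and suppose there is an idempotent $p\in\overline{A}\cap\tilde h(J_\delta(S))$. Then $h^{-1}(A)$ is a $C$-set in $S$ but is not a central set in $S$.
   Context: A partial semigroup is a pair $(S,\ast)$ where $\ast$ is an operation defined on a subset of $S\times S$ such that $(x\ast y)\ast z=x\ast(y\ast z)$ in the sense that if either side is defined, so is the other and they are equal; commutative means $x\ast y=y\ast x$ whenever defined. $\phi_S(s)=\{t: s\ast t\text{ defined}\}$, $\sigma_S(H)=\bigcap_{s\in H}\phi_S(s)$ for $H\in\mathcal{P}_f(S)$; $S$ is adequate if all $\sigma_S(H)\ne\emptyset$. A map $h:S\to T$ is a partial semigroup homomorphism if whenever $y\in\phi_S(x)$, $h(y)\in\phi_T(h(x))$ and $h(x\ast y)=h(x)\ast' h(y)$. $\tilde h(p)=\{B\subseteq T: h^{-1}(B)\in p\}$ for ultrafilters $p\in\beta S$; $\overline{A}=\{p: A\in p\}$. $\delta S=\bigcap_{x\in S}\overline{\phi_S(x)}$, with operation $p\ast q=\{A\subseteq S:\{s: s^{-1}A\in q\}\in p\}$, $s^{-1}A=\{t\in\phi_S(s): s\ast t\in A\}$; it is a compact right topological semigroup with smallest ideal $K(\delta S)$ (similarly for $T$). A set is central if it belongs to some idempotent in $K(\delta S)$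 (resp. $K(\delta T)$). A sequence $\langle y_n\rangle$ in $S$ is adequate if $\prod_{n\in F}y_n$ is defined for every $F\in\mathcal{P}_f(\mathbb{N})$ and for every $K\in\mathcal{P}_f(S)$ there is $m$ with $\prod_{n\in F}y_n\in\sigma_S(K)$ whenever $\min F\ge m$; $\mathcal{T}_S$ is the set of adequate sequences. For $W\in\mathcal{P}_f(S)$, $a\in S$, $W\ast a=\{w\ast a: w\in W,\ w\ast a\text{ defined}\}$. $B$ is a $J_\delta$-set if for every $F\in\mathcal{P}_f(\mathcal{T}_S)$ and $W\in\mathcal{P}_f(S)$ there exist $a\in\sigma_S(W)$, $H\in\mathcal{P}_f(\mathbb{N})$ with $\prod_{t\in H}f(t)\in\sigma_S(W\ast a)$ and $a\ast\prod_{t\in H}f(t)\in B$ for each $f\in F$; $J_\delta(S)=\{p\in\delta S:\text{every member of }p\text{ is a }J_\delta\text{-set}\}$. $A$ is a $C$-set if there exist $\alpha:\mathcal{P}_f(\mathcal{T}_S)\to S$ and $H:\mathcal{P}_f(\mathcal{T}_S)\to\mathcal{P}_f(\mathbb{N})$ such that (1) $F\subsetneq G$ implies $\max H(F)<\min H(G)$, and (2) whenever $G_1\subsetneq\cdots\subsetneq G_m$ in $\mathcal{P}_f(\mathcal{T}_S)$ and $f_i\in G_i$, $\prod_{i=1}^m\big(\alpha(G_i)\ast\prod_{t\in H(G_i)}f_i(t)\big)\in A$. *)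

(* Defs.v *)
From Stdlib Require Import List Arith.
Import ListNotations.

Set Implicit Arguments.

Section PartialSemigroups.

Variable S : Type.
Variable op : S -> S -> option S.

Definition psg_assoc : Prop :=
  forall x y z : S,
    match op x y with Some u => op u z | None => None end =
    match op y z with Some v => op x v | None => None end.

Definition psg_comm : Prop := forall x y : S, op x y = op y x.

(** phi_S(s) and sigma_S(H); finite nonempty subsets of S are given by
    nonempty lists (the notions below only depend on the underlying set). *)
Definition phi (s : S) (t : S) : Prop := op s t <> None.

Definition sigma (H : list S) (t : S) : Prop := forall s, In s H -> phi s t.

Definition psg_adequate : Prop :=
  forall H : list S, H <> [] -> exists t, sigma H t.

Fixpoint prodl (l : list S) : option S :=
  match l with
  | [] => None
  | x :: l' => match l' with
               | [] => Some x
               | _ => match prodl l' with Some v => op x v | None => None end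
               end
  end.

Fixpoint prodlo (l : list (option S)) : option S :=
  match l with
  | [] => None
  | o :: l' => match l' with
               | [] => o
               | _ => match o, prodlo l' with
                      | Some a, Some b => op a b
                      | _, _ => None
                      end
               end
  end.

End PartialSemigroups.

(** P_f(N): nonempty finite subsets of N, represented canonically by their
    strictly increasing enumeration. *)
Fixpoint strict_incr (l : list nat) : Prop :=
  match l with
  | [] => True
  | x :: l' => match l' with
               | [] => True
               | y :: _ => x < y /\ strict_incr l'
               end
  end.

Definition PfN (F : list nat) : Prop := F <> [] /\ strict_incr F.
Definition minF (F : list nat) : nat := hd 0 F.
Definition maxF (F : list nat) : nat := last F 0.

Section Sequences.

Variable S : Type.
Variable op : S -> S -> option S.

Definition prodseq (y : nat -> S) (F : list nat) : option S :=
  prodl op (map y F).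

Definition adequate_seq (y : nat -> S) : Prop :=
  (forall F, PfN F -> prodseq y F <> None) /\
  (forall K : list S, K <> [] ->
     exists m, forall F, PfN F -> m <= minF F ->
       exists x, prodseq y F = Some x /\ sigma op K x).

Definition sigma_Wa (W : list S) (a : S) (t : S) : Prop :=
  forall w u, In w W -> op w a = Some u -> phi op u t.

Definition Jdelta_set (B : S -> Prop) : Prop :=
  forall (F : list (nat -> S)) (W : list S),
    F <> [] -> (forall f, In f F -> adequate_seq f) -> W <> [] ->
    exists a H, sigma op W a /\ PfN H /\
      forall f, In f F ->
        exists x, prodseq f H = Some x /\ sigma_Wa W a x /\
          exists y, op a x = Some y /\ B y.

Definition PfT (F : (nat -> S) -> Prop) : Prop :=
  (exists l : list (nat -> S), l <> [] /\ forall f, F f <-> In f l) /\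
  (forall f, F f -> adequate_seq f).

Definition strict_sub {X : Type} (F G : X -> Prop) : Prop :=
  (forall x, F x -> G x) /\ exists x, G x /\ ~ F x.

Fixpoint chainPfT (Gs : list ((nat -> S) -> Prop)) : Prop :=
  match Gs with
  | [] => True
  | G :: Gs' => PfT G /\
      match Gs' with
      | [] => True
      | G' :: _ => strict_sub G G' /\ chainPfT Gs'
      end
  end.

Definition C_set (A : S -> Prop) : Prop :=
  exists (alpha : ((nat -> S) -> Prop) -> S)
         (H : ((nat -> S) -> Prop) -> list nat),
    (forall F, PfT F -> PfN (H F)) /\
    (forall F G, PfT F -> PfT G -> strict_sub F G -> maxF (H F) < minF (H G)) /\
    (forall (GF : list (((nat -> S) -> Prop) * (nat -> S))),
       GF <> [] -> chainPfT (map fst GF) ->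
       (forall Gf, In Gf GF -> (fst Gf) (snd Gf)) ->
       exists x,
         prodlo op (map (fun Gf =>
                          match prodseq (snd Gf) (H (fst Gf)) with
                          | Some v => op (alpha (fst Gf)) v
                          | None => None
                          end) GF) = Some x
         /\ A x).

Definition ultrafilter (p : (S -> Prop) -> Prop) : Prop :=
  ~ p (fun _ => False) /\
  p (fun _ => True) /\
  (forall A B : S -> Prop, p A -> (forall x, A x -> B x) -> p B) /\
  (forall A B : S -> Prop, p A -> p B -> p (fun x => A x /\ B x)) /\
  (forall A : S -> Prop, p A \/ p (fun x => ~ A x)).

Definition deltaS (p : (S -> Prop) -> Prop) : Prop :=
  ultrafilter p /\ forall x, p (phi op x).

Definition sinv (s : S) (A : S -> Prop) (t : S) : Prop :=
  exists u, op s t = Some u /\ A u.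

Definition ufmul (p q : (S -> Prop) -> Prop) : (S -> Prop) -> Prop :=
  fun A => p (fun s => q (sinv s A)).

Definition ufeq (p q : (S -> Prop) -> Prop) : Prop := forall A, p A <-> q A.

Definition ideal_delta (I : ((S -> Prop) -> Prop) -> Prop) : Prop :=
  (exists p, I p) /\
  (forall p, I p -> deltaS p) /\
  (forall p p', I p -> ufeq p p' -> I p') /\
  (forall p q, I p -> deltaS q -> I (ufmul p q) /\ I (ufmul q p)).

Definition in_K_delta (p : (S -> Prop) -> Prop) : Prop :=
  forall I, ideal_delta I -> I p.

Definition idempotent (p : (S -> Prop) -> Prop) : Prop := ufeq (ufmul p p) p.

Definition central (A : S -> Prop) : Prop :=
  exists p, deltaS p /\ in_K_delta p /\ idempotent p /\ p A.

Definition in_Jdelta (p : (S -> Prop) -> Prop) : Prop :=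
  deltaS p /\ forall B, p B -> Jdelta_set B.

End Sequences.

Definition psg_hom {S T : Type} (opS : S -> S -> option S)
  (opT : T -> T -> option T) (h : S -> T) : Prop :=
  forall x y z, opS x y = Some z -> opT (h x) (h y) = Some (h z).

Definition ext {S T : Type} (h : S -> T) (p : (S -> Prop) -> Prop)
  : (T -> Prop) -> Prop :=
  fun B => p (fun s => B (h s)).

(* Main.v *)
Require Import Defs.
From Stdlib Require Import List Arith Lia Classical ClassicalEpsilon FunctionalExtensionality PropExtensionality.
Import ListNotations.

Lemma pred_ext {X} (P Q : X -> Prop) : (forall x, P x <-> Q x) -> P = Q.
Proof. intro H. apply functional_extensionality. intro x. apply propositional_extensionality. auto. Qed.

Definition dec (P : Prop) : bool := if excluded_middle_informative P then true else false.
Lemma dec_true P : dec P = true <-> P.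
Proof. unfold dec. destruct (excluded_middle_informative P); split; auto; congruence. Qed.

Lemma in_filter_dec {X} (G : X -> Prop) l x : In x (filter (fun y => dec (G y)) l) <-> In x l /\ G x.
Proof. rewrite filter_In, dec_true. tauto. Qed.

Lemma filter_lt {X} (G : X -> Prop) l x : In x l -> ~ G x -> length (filter (fun y => dec (G y)) l) < length l.
Proof.
  induction l as [|y l IH]; simpl; [tauto|]. intros [E|Hin] Hn.
  - subst y. assert (dec (G x) = false). { destruct (dec (G x)) eqn:E0; auto. exfalso. apply Hn. apply dec_true. exact E0. }
    rewrite H. pose proof (filter_length_le (fun y => dec (G y)) l). lia.
  - specialize (IH Hin Hn). destruct (dec (G y)); simpl; lia.
Qed.

Fixpoint subl {X} (l : list X) : list (list X) :=
  match l with [] => [[]] | x :: l' => map (cons x) (subl l') ++ subl l' end.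
Lemma filter_subl {X} (f : X -> bool) l : In (filter f l) (subl l).
Proof.
  induction l as [|a l IH]; simpl; auto. destruct (f a); apply in_or_app; [left; apply in_map; auto|right; auto].
Qed.

Lemma strict_incr_shift m F : strict_incr F -> strict_incr (map (fun n => n + m) F).
Proof.
  induction F as [|x F IH]; simpl; auto. destruct F as [|y F]; simpl; auto.
  intros [H1 H2]. split; [lia|]. apply IH; auto.
Qed.
Lemma PfN_shift m F : PfN F -> PfN (map (fun n => n + m) F).
Proof. intros [H1 H2]. split; [|apply strict_incr_shift; auto]. destruct F; simpl; congruence. Qed.
Lemma minF_shift m F : F <> [] -> minF (map (fun n => n + m) F) = minF F + m.
Proof. destruct F; simpl; congruence. Qed.

Lemma combine_lists {X Y} (Gs : list X) (P : X -> list Y -> Prop) :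
  (forall G L L', P G L -> incl L L' -> P G L') ->
  (forall G, In G Gs -> exists L, P G L) -> exists L, forall G, In G Gs -> P G L.
Proof.
  intros Mono. induction Gs as [|G Gs IH]; intros H.
  - exists []. intros _ [].
  - destruct (H G (or_introl eq_refl)) as [L0 H0].
    destruct IH as [L1 H1]. { intros; apply H; right; auto. }
    exists (L0 ++ L1). intros G' [<-|Hin].
    + apply Mono with L0; auto. apply incl_appl, incl_refl.
    + apply Mono with L1; auto. apply incl_appr, incl_refl.
Qed.

Lemma strict_sub_trans {X} (A B C : X -> Prop) : strict_sub A B -> strict_sub B C -> strict_sub A C.
Proof.
  intros [H1 _] [H2 [x [Cx nBx]]]. split; auto. exists x. split; auto.
Qed.

Section Part1.
Variables (S T : Type) (opS : S -> S -> option S) (opT : T -> T -> option T) (h : S -> T)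
  (A : T -> Prop) (p : (T -> Prop) -> Prop) (r : (S -> Prop) -> Prop) (s0 : S).
Hypothesis assocS : psg_assoc opS.
Hypothesis assocT : psg_assoc opT.
Hypothesis hom : psg_hom opS opT h.
Hypothesis pU : ultrafilter p.
Hypothesis idem : idempotent opT p.
Hypothesis pA : p A.
Hypothesis rJ : in_Jdelta opS r.
Hypothesis peq : ufeq p (ext h r).

Lemma p_mono X Y : p X -> (forall t, X t -> Y t) -> p Y.
Proof. destruct pU as (_&_&H&_). apply H. Qed.
Lemma p_and X Y : p X -> p Y -> p (fun t => X t /\ Y t).
Proof. destruct pU as (_&_&_&H&_). apply H. Qed.
Lemma p_true : p (fun _ => True).
Proof. destruct pU as (_&H&_). apply H. Qed.

Definition Astar t := A t /\ p (sinv opT t A).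
Lemma Astar_p : p Astar.
Proof.
  pose proof (proj2 (idem A) pA) as H. unfold ufmul in H.
  exact (p_and _ _ pA H).
Qed.
Lemma Astar_inv t : Astar t -> p (sinv opT t Astar).
Proof.
  intros [_ H]. pose proof (proj2 (idem _) H) as H2. unfold ufmul in H2.
  apply p_mono with (fun u => sinv opT t A u /\ p (sinv opT u (sinv opT t A))).
  { apply p_and; auto. }
  intros u [[w [Hw Aw]] Hp]. exists w. split; auto. split; auto.
  apply p_mono with (1 := Hp). intros v [v' [Hv' [w' [Hw' Aw']]]]. exists w'. split; auto.
  pose proof (assocT t u v) as HA. rewrite Hw, Hv' in HA. congruence.
Qed.

Lemma p_list (W : list S) (Q : S -> T -> Prop) : (forall k, In k W -> p (Q k)) ->
  p (fun t => forall k, In k W -> Q k t).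
Proof.
  induction W as [|k W IH]; intro H.
  - apply p_mono with (1 := p_true). intros t _ k [].
  - apply p_mono with (1 := p_and _ _ (H k (or_introl eq_refl)) (IH (fun k' H' => H k' (or_intror H')))).
    intros t [H1 H2] k' [<-|Hin]; auto.
Qed.

Definition omul (a b : option S) : option S :=
  match a, b with Some x, Some y => opS x y | _, _ => None end.
Lemma prodlo_cons o l : l <> [] -> prodlo opS (o :: l) = omul o (prodlo opS l).
Proof. destruct l; [congruence|reflexivity]. Qed.
Lemma omul_assoc a b c : omul a (omul b c) = omul (omul a b) c.
Proof.
  destruct a as [x|], b as [y|], c as [z|]; simpl; auto.
  all: try (destruct (opS y z); auto; fail).
  all: try (destruct (opS x y); auto; fail).
  all: try (rewrite (assocS x y z); reflexivity).
  all: try (rewrite <- (assocS x y z); reflexivity).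
Qed.
Lemma prodlo_snoc l o : l <> [] -> prodlo opS (l ++ [o]) = omul (prodlo opS l) o.
Proof.
  induction l as [|x l IH]; [congruence|]. intros _.
  destruct l as [|y l].
  - simpl. reflexivity.
  - change ((x :: y :: l) ++ [o]) with (x :: ((y :: l) ++ [o])).
    rewrite prodlo_cons by (destruct l; simpl; congruence).
    rewrite IH by congruence. rewrite omul_assoc.
    rewrite (prodlo_cons x (y :: l)) by congruence. reflexivity.
Qed.

Definition shift m (f : nat -> S) := fun n => f (n + m).
Lemma prodseq_shift m f H : prodseq opS (shift m f) H = prodseq opS f (map (fun n => n + m) H).
Proof. unfold prodseq, shift. rewrite map_map. reflexivity. Qed.

Lemma adequate_shift m f : adequate_seq opS f -> adequate_seq opS (shift m f).
Proof.
  intros [H1 H2]. split.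
  - intros F HF. rewrite prodseq_shift. apply H1, PfN_shift; auto.
  - intros K HK. destruct (H2 K HK) as [m0 Hm0]. exists m0. intros F HF Hle.
    rewrite prodseq_shift. apply Hm0; [apply PfN_shift; auto|].
    rewrite minF_shift by (destruct HF; auto). lia.
Qed.

Definition PT := (nat -> S) -> Prop.
Definition finite (F : PT) := exists l, forall f, F f <-> In f l.
Definition R (G F : PT) := strict_sub G F /\ finite F.

Lemma wf_R : well_founded R.
Proof.
  assert (K : forall n l F, length l <= n -> (forall f, F f <-> In f l) -> Acc R F).
  { induction n; intros l F Hlen Hl; constructor; intros G [[Hsub [x [Fx nGx]]] _];
    pose proof (filter_lt G l x (proj1 (Hl x) Fx) nGx) as Hlt.
    - lia.
    - apply IHn with (filter (fun y => dec (G y)) l); [lia|].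
      intro f. rewrite in_filter_dec. specialize (Hsub f). specialize (Hl f). tauto. }
  intro F. destruct (classic (finite F)) as [[l Hl]|Hn].
  - apply K with (length l) l; auto.
  - constructor. intros G [_ Hf]. contradiction.
Qed.

Definition Gs (l : list (nat -> S)) : list PT := map (fun l' => fun g => In g l') (subl l).
Lemma sub_in_Gs (F : PT) l : (forall f, F f <-> In f l) ->
  forall G : PT, (forall g, G g -> F g) -> In G (Gs l).
Proof.
  intros Hl G Hsub.
  assert (E : G = fun g => In g (filter (fun y => dec (G y)) l)).
  { apply pred_ext. intro g. rewrite in_filter_dec. specialize (Hsub g). specialize (Hl g). tauto. }
  rewrite E. unfold Gs. apply (in_map (fun l' g => In g l')), filter_subl.
Qed.

Definition z (alpha : PT -> S) (H : PT -> list nat) (Gf : PT * (nat -> S)) : option S :=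
  match prodseq opS (snd Gf) (H (fst Gf)) with Some v => opS (alpha (fst Gf)) v | None => None end.
Definition val alpha H GF := prodlo opS (map (z alpha H) GF).

Definition chain_end (GF : list (PT * (nat -> S))) (F : PT) : Prop :=
  exists GF' f, GF = GF' ++ [(F, f)] /\ chainPfT opS (map fst GF) /\
    (forall Gf, In Gf GF -> fst Gf (snd Gf)).

Lemma chain_PfT Gs0 G : chainPfT opS Gs0 -> In G Gs0 -> PfT opS G.
Proof.
  induction Gs0 as [|G0 Gs0 IH]; intros Hc Hin; [destruct Hin|].
  simpl in Hc. destruct Hin as [<-|Hin]; [tauto|].
  destruct Gs0; [destruct Hin|]. apply IH; tauto.
Qed.

Lemma chain_snoc Gs0 F : Gs0 <> [] -> chainPfT opS (Gs0 ++ [F]) ->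
  chainPfT opS Gs0 /\ (forall G, In G Gs0 -> strict_sub G F).
Proof.
  induction Gs0 as [|G0 Gs0 IH]; [congruence|]. intros _ Hc.
  destruct Gs0 as [|G1 Gs0].
  - simpl in Hc. simpl. split; [tauto|]. intros G [<-|[]]. tauto.
  - change ((G0 :: G1 :: Gs0) ++ [F]) with (G0 :: G1 :: (Gs0 ++ [F])) in Hc.
    destruct Hc as [HP [Hs Hc]].
    destruct (IH ltac:(congruence) Hc) as [Hc' Hall].
    split.
    + simpl. split; auto.
    + intros G [<-|Hin].
      * apply strict_sub_trans with G1; auto. apply Hall. left; auto.
      * apply Hall; auto.
Qed.

Lemma chain_end_snoc GF F : chain_end GF F -> forall GF' f, GF = GF' ++ [(F, f)] -> GF' <> [] ->
  (exists GF'' G g, GF' = GF'' ++ [(G, g)] /\ chain_end GF' G /\ strict_sub G F).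
Proof.
  intros [GF0 [f0 [E [Hc Hm]]]] GF' f E' Hne.
  destruct (exists_last Hne) as [GF'' [[G g] E'']]. exists GF'', G, g. split; auto.
  rewrite E', map_app in Hc. simpl in Hc.
  destruct (chain_snoc (map fst GF') F) as [Hc' Hall]; auto.
  { destruct GF'; simpl; congruence. }
  split.
  - exists GF'', g. split; auto. split; auto. intros Gf HG. apply Hm. rewrite E'. apply in_or_app. auto.
  - apply Hall. rewrite E''. rewrite map_app. apply in_or_app. right. left. reflexivity.
Qed.

Lemma chain_members GF F : chain_end GF F -> forall Gf, In Gf GF -> fst Gf = F \/ strict_sub (fst Gf) F.
Proof.
  intros Hce Gf Hin. destruct Hce as [GF' [f [E [Hc Hm]]]].
  rewrite E in Hin. apply in_app_or in Hin. destruct Hin as [Hin|[<-|[]]]; [|left; reflexivity].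
  right. rewrite E, map_app in Hc. apply chain_snoc in Hc.
  - apply (proj2 Hc). apply in_map. auto.
  - destruct GF'; simpl; [destruct Hin|congruence].
Qed.

Lemma val_ext a1 H1 a2 H2 GF : (forall Gf, In Gf GF -> a1 (fst Gf) = a2 (fst Gf) /\ H1 (fst Gf) = H2 (fst Gf)) ->
  val a1 H1 GF = val a2 H2 GF.
Proof.
  intro E. unfold val. f_equal. apply map_ext_in. intros Gf HG. destruct (E Gf HG) as [E1 E2].
  unfold z. rewrite E1, E2. reflexivity.
Qed.

Lemma fin_chains alpha H F : finite F -> exists L, forall GF G, chain_end GF G -> strict_sub G F -> In (val alpha H GF) L.
Proof.
  revert F. apply (well_founded_induction wf_R (fun F => finite F -> exists L, forall GF G, chain_end GF G -> strict_sub G F -> In (val alpha H GF) L)).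
  intros F IH [l Hl].
  destruct (combine_lists (Gs l) (fun G L => R G F -> forall GF G', chain_end GF G' -> strict_sub G' G -> In (val alpha H GF) L)) as [Lall Hall].
  { intros G L L' HP Hi HR GF G' Hc Hs. apply Hi. eapply HP; eauto. }
  { intros G _. destruct (classic (R G F)) as [HR|HR].
    - destruct (IH G HR) as [L HL]. { destruct HR as [[Hs [x [Fx nGx]]] _].
        exists (filter (fun y => dec (G y)) l). intro f. rewrite in_filter_dec. specialize (Hs f). specialize (Hl f). tauto. }
      exists L. intros _. exact HL.
    - exists []. intro; contradiction. }
  exists (map (z alpha H) (list_prod (Gs l) l) ++
          map (fun x => omul (fst x) (z alpha H (snd x))) (list_prod Lall (list_prod (Gs l) l))).
  intros GF G Hce Hs.
  pose proof Hce as Hce1. destruct Hce1 as [GF' [g [E [Hc Hm]]]].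
  assert (HGg : In (G, g) (list_prod (Gs l) l)).
  { apply in_prod.
    - apply sub_in_Gs with F; auto. apply Hs.
    - apply Hl. apply (proj1 Hs). apply (Hm (G, g)). rewrite E. apply in_or_app. right. left. auto. }
  destruct (classic (GF' = [])) as [EG|EG].
  - subst GF'. apply in_or_app. left. rewrite E. simpl. unfold val. simpl. apply in_map. auto.
  - apply in_or_app. right.
    destruct (chain_end_snoc GF G Hce GF' g E EG) as [GF'' [G' [g' [E2 [Hce' Hs']]]]].
    unfold val. rewrite E, map_app. simpl. rewrite prodlo_snoc by (destruct GF'; simpl; congruence).
    apply in_map_iff. exists (val alpha H GF', (G, g)). split; [reflexivity|].
    apply in_prod; auto. refine (Hall G _ _ GF' G' Hce' Hs').
    + apply sub_in_Gs with F; auto. apply Hs.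
    + split; auto. exists l. auto.
Qed.

Lemma bound_H (H : PT -> list nat) F : finite F -> exists m, forall G, strict_sub G F -> maxF (H G) < m.
Proof.
  intros [l Hl].
  assert (K : forall L : list PT, exists m, forall G, In G L -> maxF (H G) < m).
  { induction L as [|G L [m Hm]]. - exists 0. intros _ []. 
    - exists (Datatypes.S (max (maxF (H G)) m)). intros G' [<-|Hin]; [lia|]. specialize (Hm G' Hin). lia. }
  destruct (K (Gs l)) as [m Hm]. exists m. intros G Hs. apply Hm. apply sub_in_Gs with F; auto. apply Hs.
Qed.

Definition V := (S * list nat)%type.
Definition dflt : V := (s0, [0]).
Definition full (g : PT -> V) (F : PT) (v : V) : PT -> V :=
  fun G => if excluded_middle_informative (G = F) then v else g G.
Definition Good (F : PT) (g : PT -> V) (v : V) : Prop :=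
  PfN (snd v) /\ (forall G, strict_sub G F -> maxF (snd (g G)) < minF (snd v)) /\
  forall GF, chain_end GF F -> exists x,
    val (fun G => fst (full g F v G)) (fun G => snd (full g F v G)) GF = Some x /\ Astar (h x).
Definition tot (F : PT) (rec : forall G, R G F -> V) : PT -> V :=
  fun G => match excluded_middle_informative (R G F) with left HR => rec G HR | right _ => dflt end.
Definition step (F : PT) (rec : forall G, R G F -> V) : V :=
  match excluded_middle_informative (exists v, Good F (tot F rec) v) with
  | left e => proj1_sig (constructive_indefinite_description _ e)
  | right _ => dflt end.
Definition aH : PT -> V := Fix wf_R (fun _ => V) step.
Lemma aH_eq F : aH F = step F (fun G _ => aH G).
Proof.
  unfold aH. refine (Fix_eq wf_R (fun _ => V) step _ F). intros x f g E.
  assert (E' : f = g). { apply functional_extensionality_dep. intro y. apply functional_extensionality_dep. auto. }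
  subst. reflexivity.
Qed.
Definition alpha G := fst (aH G).
Definition Hf G := snd (aH G).

Lemma strict_neq (G F : PT) : strict_sub G F -> G <> F.
Proof. intros [_ [x [Fx nGx]]] E. subst. auto. Qed.

Definition InvP F := PfT opS F -> PfN (Hf F) /\ (forall G, strict_sub G F -> maxF (Hf G) < minF (Hf F)) /\
  forall GF, chain_end GF F -> exists x, val alpha Hf GF = Some x /\ Astar (h x).
Lemma Inv : forall F, InvP F.
Proof.
  apply (well_founded_induction wf_R InvP). intros F IH HPF.
  set (g := tot F (fun G _ => aH G)).
  assert (Hfin : finite F). { destruct HPF as [[l [_ Hl]] _]. exists l; auto. }
  assert (Hg : forall G, strict_sub G F -> g G = aH G).
  { intros G Hs. unfold g, tot. destruct (excluded_middle_informative (R G F)) as [|n]; auto.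
    exfalso. apply n. split; auto. }
  assert (Ex : exists v, Good F g v).
  { destruct HPF as [[l [Hne Hl]] Had].
    destruct (fin_chains alpha Hf F Hfin) as [Lopt HL].
    set (W := s0 :: flat_map (fun o => match o with Some x => [x] | None => [] end) Lopt).
    assert (HW : forall x, In (Some x) Lopt -> In x W).
    { intros x Hx. right. apply in_flat_map. exists (Some x). simpl; auto. }
    destruct (bound_H Hf F Hfin) as [m Hm].
    set (BT := fun t => Astar t /\ forall k, In k W -> Astar (h k) -> sinv opT (h k) Astar t).
    assert (pBT : p BT).
    { apply p_and; [apply Astar_p|]. apply p_list. intros k _.
      destruct (classic (Astar (h k))) as [Hk|Hk].
      - apply p_mono with (1 := Astar_inv _ Hk). auto.
      - apply p_mono with (1 := p_true). intros t _ Hk'. contradiction. }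
    assert (rBT : r (fun s => BT (h s))). { apply (peq BT). exact pBT. }
    destruct rJ as [_ HJ]. specialize (HJ _ rBT).
    destruct (HJ (map (shift m) l) W) as [a [Hj [HaW [HPj Hall]]]].
    { destruct l; simpl; congruence. }
    { intros f Hf0. apply in_map_iff in Hf0. destruct Hf0 as [f0 [<- Hin]].
      apply adequate_shift. apply Had. apply Hl. auto. }
    { unfold W. congruence. }
    exists (a, map (fun n => n + m) Hj). split; [|split].
    - simpl. apply PfN_shift; auto.
    - intros G Hs. rewrite Hg by auto. simpl. rewrite minF_shift by (destruct HPj; auto).
      specialize (Hm G Hs). unfold Hf in Hm. lia.
    - intros GF Hce. pose proof Hce as Hce1. destruct Hce1 as [GF' [f [E [Hc Hmem]]]].
      assert (Hfl : In f l). { apply Hl. apply (Hmem (F, f)). rewrite E. apply in_or_app. right. left. auto. }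
      destruct (Hall (shift m f)) as [x [Hx [HxW [y [Hy BTy]]]]]. { apply in_map. auto. }
      assert (Hz : z (fun G => fst (full g F (a, map (fun n => n + m) Hj) G))
                     (fun G => snd (full g F (a, map (fun n => n + m) Hj) G)) (F, f) = Some y).
      { unfold z, full. simpl. destruct (excluded_middle_informative (F = F)) as [_|n]; [|congruence].
        simpl. rewrite <- prodseq_shift. rewrite Hx. exact Hy. }
      destruct (classic (GF' = [])) as [EG|EG].
      + subst GF'. exists y. split; [|apply BTy]. rewrite E. unfold val. simpl. exact Hz.
      + destruct (chain_end_snoc GF F Hce GF' f E EG) as [GF'' [G' [g' [E2 [Hce' Hs']]]]].
        assert (HPG : PfT opS G').
        { destruct Hce' as [a0 [b0 [E3 [Hc3 _]]]]. apply chain_PfT with (1 := Hc3).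
          rewrite E3, map_app. apply in_or_app. right. left. auto. }
        destruct (IH G' (conj Hs' Hfin) HPG) as [_ [_ HG']].
        destruct (HG' GF' Hce') as [k [Hk Ak]].
        assert (HkW : In k W). { apply HW. rewrite <- Hk. apply (HL GF' G'); auto. }
        assert (Eval : val (fun G => fst (full g F (a, map (fun n => n + m) Hj) G))
                     (fun G => snd (full g F (a, map (fun n => n + m) Hj) G)) GF' = Some k).
        { rewrite <- Hk. apply val_ext. intros Gf HGf.
          destruct (chain_members GF' G' Hce' Gf HGf) as [E4|E4].
          - assert (Hs5 : strict_sub (fst Gf) F) by (rewrite E4; auto).
            unfold full. destruct (excluded_middle_informative (fst Gf = F)) as [e|_].
            + exfalso. exact (strict_neq _ _ Hs5 e).
            + rewrite Hg by auto. auto.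
          - assert (Hs5 : strict_sub (fst Gf) F) by (apply strict_sub_trans with G'; auto).
            unfold full. destruct (excluded_middle_informative (fst Gf = F)) as [e|_].
            + exfalso. exact (strict_neq _ _ Hs5 e).
            + rewrite Hg by auto. auto. }
        pose proof (HaW k HkW) as Hka. unfold phi in Hka.
        destruct (opS k a) as [u|] eqn:Eka; [|congruence].
        pose proof (HxW k u HkW Eka) as Hux. unfold phi in Hux.
        pose proof (assocS k a x) as HA. rewrite Eka, Hy in HA.
        destruct (opS u x) as [w|] eqn:Eux; [|congruence].
        exists w. split.
        * rewrite E. unfold val. rewrite map_app.
          change (map ?zz [(F, f)]) with [zz (F, f)].
          rewrite prodlo_snoc by (destruct GF'; simpl; congruence).
          unfold val in Eval. rewrite Eval, Hz. simpl. congruence.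
        * destruct BTy as [_ Hb]. destruct (Hb k HkW Ak) as [u' [Hu' Au']].
          rewrite (hom _ _ _ (eq_sym HA)) in Hu'. injection Hu' as <-. exact Au'. }
  assert (HGood : Good F g (aH F)).
  { rewrite (aH_eq F). unfold step.
    destruct (excluded_middle_informative _) as [e|n]; [|contradiction].
    destruct (constructive_indefinite_description _ e) as [v Hv]. simpl. exact Hv. }
  destruct HGood as [P1 [P2 P3]]. split; [exact P1|split].
  - intros G Hs. unfold Hf. rewrite <- (Hg G Hs). exact (P2 G Hs).
  - intros GF Hce. destruct (P3 GF Hce) as [x [Hx Ax]]. exists x. split; auto.
    rewrite <- Hx. apply val_ext. intros Gf HGf. unfold full, alpha, Hf.
    destruct (excluded_middle_informative (fst Gf = F)) as [e|ne].
    + rewrite e. auto.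
    + destruct (chain_members GF F Hce Gf HGf) as [e|Hs]; [contradiction|].
      rewrite Hg by auto. auto.
Qed.

Lemma Cset_part : C_set opS (fun s => A (h s)).
Proof.
  exists alpha, Hf. split; [|split].
  - intros F HF. apply (Inv F HF).
  - intros F G HF HG Hs. apply (Inv G HG). exact Hs.
  - intros GF Hne Hc Hm.
    destruct (exists_last Hne) as [GF' [[F0 f0] E]].
    assert (Hce : chain_end GF F0). { exists GF', f0. auto. }
    assert (HP : PfT opS F0).
    { apply chain_PfT with (1 := Hc). rewrite E, map_app. apply in_or_app. right. left. auto. }
    destruct (Inv F0 HP) as [_ [_ H3]]. destruct (H3 GF Hce) as [x [Hx Ax]].
    exists x. split; [exact Hx|apply Ax].
Qed.
End Part1.

Lemma ufeq_eq {X} (p q : (X -> Prop) -> Prop) : ufeq p q -> p = q.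
Proof. intro H. apply pred_ext. exact H. Qed.

Section Part2.
Variables (S T : Type) (opS : S -> S -> option S) (opT : T -> T -> option T) (h : S -> T).
Hypothesis assocS : psg_assoc opS.
Hypothesis hom : psg_hom opS opT h.

Lemma uf_mono (q : (S -> Prop) -> Prop) : ultrafilter q -> forall X Y, q X -> (forall t, X t -> Y t) -> q Y.
Proof. intros (_&_&H&_) X Y; apply H. Qed.
Lemma uf_and (q : (S -> Prop) -> Prop) : ultrafilter q -> forall X Y, q X -> q Y -> q (fun t => X t /\ Y t).
Proof. intros (_&_&_&H&_) X Y; apply H. Qed.

Lemma ext_mul r q : deltaS opS q -> forall B,
  ufmul opT (ext h r) (ext h q) B <-> ext h (ufmul opS r q) B.
Proof.
  intros [Uq Pq] B. unfold ufmul, ext.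
  assert (E : (fun s => q (fun s' => sinv opT (h s) B (h s'))) =
              (fun s => q (sinv opS s (fun u => B (h u))))).
  { apply pred_ext. intro s. split; intro Hq.
    - apply uf_mono with (fun s' => sinv opT (h s) B (h s') /\ phi opS s s'); auto.
      + apply uf_and; auto.
      + intros t [[u' [Hu' Bu']] Hp]. unfold phi in Hp.
        destruct (opS s t) as [u|] eqn:E; [|congruence].
        exists u. split; auto. rewrite (hom _ _ _ E) in Hu'. congruence.
    - apply uf_mono with (1 := Uq) (2 := Hq). intros t [u [Hu Bu]].
      exists (h u). split; auto. }
  rewrite E. tauto.
Qed.

Lemma delta_mul p0 q : deltaS opS p0 -> deltaS opS q -> deltaS opS (ufmul opS p0 q).
Proof.
  intros [Up Pp] [Uq Pq].
  destruct Up as (Ne & Tr & Mo & An & Co).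
  destruct Uq as (Neq & Trq & Moq & Anq & Coq).
  unfold ufmul. split; [split; [|split; [|split; [|split]]]|].
  - intro H. apply Ne. apply Mo with (1 := H). intros s Hs. apply Neq.
    apply Moq with (1 := Hs). intros t [u [_ []]].
  - apply Mo with (1 := Tr). intros s _. apply Moq with (1 := Pq s).
    intros t Ht. unfold phi in Ht. destruct (opS s t) as [u|] eqn:E; [|congruence].
    exists u; auto.
  - intros X Y HX HXY. apply Mo with (1 := HX). intros s Hs.
    apply Moq with (1 := Hs). intros t [u [Hu Xu]]. exists u; auto.
  - intros X Y HX HY. apply Mo with (1 := An _ _ HX HY). intros s [H1 H2].
    apply Moq with (1 := Anq _ _ H1 H2). intros t [[u [Hu Xu]] [u' [Hu' Yu]]].
    exists u. split; auto. split; congruence.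
  - intros X. destruct (Co (fun s => q (sinv opS s X))) as [H|H]; [left; auto|right].
    apply Mo with (1 := H). intros s Hs.
    destruct (Coq (sinv opS s X)) as [H'|H']; [contradiction|].
    apply Moq with (1 := Anq _ _ H' (Pq s)). intros t [Hn Hp]. unfold phi in Hp.
    destruct (opS s t) as [u|] eqn:E; [|congruence]. exists u. split; auto.
    intro Xu. apply Hn. exists u; auto.
  - intro x. apply Mo with (1 := Pp x). intros s Hs. unfold phi in Hs.
    destruct (opS x s) as [xs|] eqn:E; [|congruence].
    apply Moq with (1 := Anq _ _ (Pq s) (Pq xs)). intros t [H1 H2].
    unfold phi in H1, H2. destruct (opS s t) as [u|] eqn:E2; [|congruence].
    exists u. split; auto. unfold phi. pose proof (assocS x s t) as HA.
    rewrite E, E2 in HA. congruence.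
Qed.

Hypothesis mapD : forall r, deltaS opS r -> deltaS opT (ext h r).
Hypothesis ontoD : forall q, deltaS opT q -> exists r, deltaS opS r /\ ufeq (ext h r) q.

Lemma K_image r : deltaS opS r -> in_K_delta opS r -> in_K_delta opT (ext h r).
Proof.
  intros Dr HK I HI.
  destruct HI as ([q Iq] & ID & IE & IM).
  set (I' := fun r' => deltaS opS r' /\ I (ext h r')).
  apply (HK I'). split; [|split; [|split]].
  - destruct (ontoD q (ID q Iq)) as [r' [Dr' E]]. apply ufeq_eq in E.
    exists r'. split; auto. rewrite E; auto.
  - intros p0 [H _]; auto.
  - intros p0 p' Hp E. apply ufeq_eq in E. subst; auto.
  - intros p0 q0 [Dp Ip] Dq. split; split.
    + apply delta_mul; auto.
    + assert (E : ext h (ufmul opS p0 q0) = ufmul opT (ext h p0) (ext h q0)).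
      { apply pred_ext. intro B. rewrite ext_mul; auto. tauto. }
      rewrite E. apply (proj1 (IM _ _ Ip (mapD _ Dq))).
    + apply delta_mul; auto.
    + assert (E : ext h (ufmul opS q0 p0) = ufmul opT (ext h q0) (ext h p0)).
      { apply pred_ext. intro B. rewrite ext_mul; auto. tauto. }
      rewrite E. apply (proj2 (IM _ _ Ip (mapD _ Dq))).
Qed.

Lemma not_central (A : T -> Prop) : ~ central opT A -> ~ central opS (fun s => A (h s)).
Proof.
  intros HnA [r [Dr [Kr [Ir Ar]]]]. apply HnA. exists (ext h r).
  split; [auto|split; [apply K_image; auto|split; [|exact Ar]]].
  intro B. rewrite ext_mul by auto. unfold ext. apply (Ir (fun s => B (h s))).
Qed.
End Part2.

Theorem corollary5p8 (S T : Type) (opS : S -> S -> option S)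
  (opT : T -> T -> option T) (h : S -> T) (A : T -> Prop)
  (p : (T -> Prop) -> Prop) :
  psg_assoc opS -> psg_comm opS -> psg_adequate opS ->
  psg_assoc opT -> psg_comm opT -> psg_adequate opT ->
  psg_hom opS opT h ->
  (forall t, exists s, h s = t) ->
  (forall r, deltaS opS r -> deltaS opT (ext h r)) ->
  (forall q, deltaS opT q -> exists r, deltaS opS r /\ ufeq (ext h r) q) ->
  ~ central opT A ->
  deltaS opT p -> idempotent opT p -> p A ->
  (exists r, in_Jdelta opS r /\ ufeq p (ext h r)) ->
  C_set opS (fun s => A (h s)) /\ ~ central opS (fun s => A (h s)).
Proof.
  intros aS cS adS aT cT adT hom surj mapD ontoD nc Dp Ip pA [r [Jr E]].
  split.
  - destruct Dp as [Up _].
    destruct (classic (exists t : T, True)) as [[t _]|nt].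
    + destruct (surj t) as [s0 _].
      apply (Cset_part S T opS opT h A p r s0); auto.
    + exfalso. destruct Up as (Ne & Tr & Mo & _). apply Ne. apply Mo with (1 := Tr).
      intros x _. apply nt. exists x. auto.
  - eapply not_central; eauto.
Qed.
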